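(* Let $V$ be a finite nonempty set, $c\in\mathbb{R}^{P_V}$, $U\subseteq V$, and $\hat x$ a maximally specific partial function on $P_V$ with $\hat x^{-1}(1)\cap (U\times(V\setminus U))=\emptyset$. If $c_{ij}\le 0$ for all $ij\in (U\times(V\setminus U))\setminus\hat x^{-1}(0)$, then there is a maximizer $x^*$ of $\varphi_c$ over $X_V[\hat x]$ such that $x^*_{ij}=0$ for all $ij\in (U\times(V\setminus U))\setminus\hat x^{-1}(0)$.
   Context: $P_V=\{pq\in V^2\mid p\neq q\}$; $X_V$ is the set of $x\in\{0,1\}^{P_V}$ with $x_{pq}+x_{qr}-x_{pr}\le 1$ for all pairwise distinct $p,q,r\in V$; $\varphi_c(x)=\sum_{pq\in P_V}c_{pq}x_{pq}$. A partial function $\tilde x$ is a map from $\operatorname{dom}(\tilde x)\subseteq P_V$ to $\{0,1\}$, $\tilde x^{-1}(b)$ the pairs mapped to $b$, and $X_V[\tilde x]=\{x\in X_V\mid x_{pq}=\tilde x_{pq}\ \forall pq\in\operatorname{dom}(\tilde x)\}$. A pair $pq$ is decided if $x_{pq}=x'_{pq}$ for all $x,x'\in X_V[\tilde x]$; $\tilde x$ is maximally specific if $X_V[\tilde x]\ne\emptyset$ and the decided pairs are exactly $\operatorname{dom}(\tilde x)$. *)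

(* Defs.v *)
From HB Require Import structures.
From mathcomp Require Import all_boot all_order all_algebra.
From mathcomp Require Import reals.
Set Implicit Arguments. Unset Strict Implicit. Unset Printing Implicit Defensive.
Import Order.TTheory GRing.Theory Num.Theory.

Definition PV (V : finType) := {pq : V * V | pq.1 != pq.2}.

(* value of x at (p,q), 0 when p = q (never used for distinct p,q) *)
Definition xat (V : finType) (x : {ffun PV V -> bool}) (p q : V) : nat :=
  match @insub _ (fun pq : V * V => pq.1 != pq.2) (PV V) (p, q) with
  | Some pq => x pq
  | None => 0%N
  end.

Definition in_XV (V : finType) (x : {ffun PV V -> bool}) : Prop :=
  forall p q r : V, p != q -> q != r -> p != r ->
    (xat x p q + xat x q r <= 1 + xat x p r)%N.

(* partial functions P_V -> {0,1}: None = outside the domain *)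
Definition pfun (V : finType) := {ffun PV V -> option bool}.

Definition in_XVp (V : finType) (xt : pfun V) (x : {ffun PV V -> bool}) : Prop :=
  in_XV x /\ forall pq b, xt pq = Some b -> x pq = b.

Definition decided (V : finType) (xt : pfun V) (pq : PV V) : Prop :=
  forall x x', in_XVp xt x -> in_XVp xt x' -> x pq = x' pq.

Definition max_specific (V : finType) (xt : pfun V) : Prop :=
  (exists x, in_XVp xt x) /\ (forall pq, decided xt pq <-> xt pq <> None).

Definition phi (R : realType) (V : finType) (c : PV V -> R) (x : {ffun PV V -> bool}) : R :=
  (\sum_(pq : PV V) c pq * (x pq)%:R)%R.

Definition cut (V : finType) (U : {set V}) (pq : PV V) : bool :=
  ((val pq).1 \in U) && ((val pq).2 \notin U).

(* Main.v *)
Require Import Defs.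
From HB Require Import structures.
From mathcomp Require Import all_boot all_order all_algebra.
From mathcomp Require Import reals boolp.
Import Order.TTheory GRing.Theory Num.Theory.

Lemma xat_sub (V : finType) (x : {ffun PV V -> bool}) (p q : V) (h : p != q) :
  xat x p q = x (exist _ (p, q) h).
Proof.
rewrite /xat; case: insubP => [u _ hu|]; last by rewrite /= h.
by congr (nat_of_bool (x _)); apply: val_inj; rewrite hu.
Qed.

Theorem corollary6p3 (R : realType) (V : finType) (c : PV V -> R) (U : {set V})
  (xh : pfun V) :
  (0 < #|V|)%N ->
  max_specific xh ->
  (forall pq, cut U pq -> xh pq <> Some true) ->
  (forall pq, cut U pq -> xh pq <> Some false -> (c pq <= 0)%R) ->
  exists xs : {ffun PV V -> bool},
    [/\ in_XVp xh xs,
        (forall x, in_XVp xh x -> (phi c x <= phi c xs)%R) &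
        (forall pq, cut U pq -> xh pq <> Some false -> xs pq = false)].
Proof.
move=> _ [[x0 Hx0] _] Hcut1 Hc.
pose P := fun x => `[< in_XVp xh x >].
have P0 : P x0 by apply/asboolP.
case: (@arg_maxP _ _ _ x0 P (phi c) P0) => x /asboolP [Tx Ax] Hmax.
pose xs := [ffun pq => x pq && ~~ cut U pq].
have Hle : (phi c x <= phi c xs)%R.
  rewrite /phi; apply: ler_sum => pq _; rewrite /xs ffunE.
  case: (boolP (cut U pq)) => hc; last by rewrite andbT.
  case E: (x pq); last by [].
  have nf : xh pq <> Some false by move=> /Ax; rewrite E.
  by rewrite /= mulr1 mulr0; apply: Hc.
exists xs; split.
- split.
  + move=> p q r hpq hqr hpr; move: (Tx p q r hpq hqr hpr).
    rewrite !xat_sub /xs !ffunE /cut /=.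
    move: (x _) (x _) (x _) (p \in U) (q \in U) (r \in U).
    by do 6!case.
  + move=> pq b E; rewrite /xs ffunE (Ax _ _ E).
    case: b E => E; last by rewrite andFb.
    case: (boolP (cut U pq)) => hc; last by rewrite andbT.
    by case: (Hcut1 _ hc E).
- move=> y Py; apply: le_trans Hle; apply: Hmax; exact/asboolP.
- by move=> pq hc _; rewrite /xs ffunE hc andbF.
Qed.
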